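(* Let $T$ be an $n$-vertex tournament with an optimal ordering $v_1,\ldots,v_n$, and let $B$ be the set of backwards edges in this ordering, with $|B|=\alpha n^2$. Suppose that the subset $B'\subseteq B$ of backwards edges of length at least $n/16$ satisfies $|B'|\ge \alpha n^2/4$. If $\alpha\le 2^{-16}$, then there exists $B''\subseteq B'$ with $|B''|\ge |B'|/2$ such that every edge of $B''$ lies in at least $n/64$ directed triangles of $T$.
   Context: Given an ordering $v_1,\ldots,v_n$ of the vertices of a tournament $T$, a backwards edge is an edge directed from $v_j$ to $v_i$ with $i<j$; its length is $j-i$. An ordering is optimal if it minimizes the number of backwards edges among all orderings of $V(T)$. A directed triangle is a set of three vertices $x,y,z$ with edges directed $x\to y$, $y\to z$, $z\to x$. *)

(* Defs.v *)
From HB Require Import structures.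
From mathcomp Require Import all_boot all_order all_algebra.
Set Implicit Arguments. Unset Strict Implicit. Unset Printing Implicit Defensive.

(* A tournament on a finite vertex type V: E x y means the edge is directed x -> y. *)
Definition is_tournament (V : finType) (E : rel V) : Prop :=
  (forall x, ~~ E x x) /\ (forall x y, x != y -> (E x y (+) E y x)).

(* An ordering v_1,...,v_n of V is an injective map f : 'I_n -> V with n = #|V|
   (0-based: v_{i+1} = f i). *)
Definition backward_edges (V : finType) (E : rel V) (n : nat) (f : 'I_n -> V)
  : {set 'I_n * 'I_n} :=
  [set p : 'I_n * 'I_n | (p.1 < p.2)%N && E (f p.2) (f p.1)].

Definition bedge_length (n : nat) (p : 'I_n * 'I_n) : nat := (p.2 - p.1)%N.

Definition optimal_ordering (V : finType) (E : rel V) (n : nat) (f : 'I_n -> V)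
  : Prop :=
  injective f /\
  forall g : 'I_n -> V, injective g ->
    (#|backward_edges E f| <= #|backward_edges E g|)%N.

Definition triangles_through (V : finType) (E : rel V) (x y : V) : nat :=
  #|[set z | E y z && E z x]|.

(* Main.v *)
Require Import Defs.
From HB Require Import structures.
From mathcomp Require Import all_boot all_order all_algebra.
From mathcomp Require Import zify lra.
Import Order.TTheory GRing.Theory Num.Theory.
Set Implicit Arguments. Unset Strict Implicit.

Section S.
Variables (V : finType) (E : rel V) (n : nat) (f : 'I_n -> V).

Definition Rb (a b : 'I_n) := E (f b) (f a).

Lemma card_bw (g : 'I_n -> V) :
  #|backward_edges E g| = \sum_(a : 'I_n) \sum_(b : 'I_n) ((a < b) && E (g b) (g a) : nat).
Proof.
rewrite -sum1_card big_mkcond /= pair_big /=.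
apply: eq_bigr => [[a b]] _ /=; rewrite /backward_edges inE /=.
by case: ifP.
Qed.

Lemma opt_le (s t : 'I_n -> 'I_n) : cancel s t -> optimal_ordering E f ->
  (\sum_(a : 'I_n) \sum_(b : 'I_n) ((a < b) && Rb a b : nat) <=
   \sum_(a : 'I_n) \sum_(b : 'I_n) ((t a < t b) && Rb a b : nat))%N.
Proof.
move=> st [finj opt].
have ginj : injective (f \o s) by move=> x y /finj /(can_inj st).
have := opt _ ginj; rewrite !card_bw => H.
apply: (leq_trans H); apply: eq_leq; symmetry.
rewrite (reindex_inj (can_inj st)) /=.
apply: eq_bigr => a _; rewrite (reindex_inj (can_inj st)) /=.
by apply: eq_bigr => b _; rewrite /Rb !st.
Qed.

Lemma sum_eq1 (i : 'I_n) (c : 'I_n -> bool) :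
  (\sum_(b : 'I_n) ((b == i) && c b : nat))%N = c i.
Proof.
rewrite (bigD1 i) //= eqxx big1 ?addn0 // => k /negbTE -> //.
Qed.

Lemma sum_eq2 (i : 'I_n) (c : 'I_n -> 'I_n -> bool) :
  (\sum_(a : 'I_n) \sum_(b : 'I_n) ((a == i) && c a b : nat))%N = \sum_b (c i b : nat).
Proof.
rewrite (bigD1 i) //= [X in (_ + X)%N]big1 ?addn0.
  by apply: eq_bigr => b _; rewrite eqxx.
by move=> k /negbTE ne; apply: big1 => b _; rewrite ne.
Qed.

Lemma sum_eq3 (i : 'I_n) (c : 'I_n -> 'I_n -> bool) :
  (\sum_(a : 'I_n) \sum_(b : 'I_n) ((b == i) && c a b : nat))%N = \sum_a (c a i : nat).
Proof. by apply: eq_bigr => a _; rewrite sum_eq1. Qed.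

End S.

Definition tA (i j a : nat) := if a == i then j else if (i < a <= j) then a.-1 else a.
Definition sA (i j p : nat) := if p == j then i else if (i <= p < j) then p.+1 else p.
Definition tB (i j a : nat) := if a == j then i else if (i <= a < j) then a.+1 else a.
Definition sB (i j p : nat) := if p == i then j else if (i < p <= j) then p.-1 else p.

Ltac brute := repeat (case: ifP => ?); lia.

Lemma idA (i j a b : nat) : i < j ->
  ((a<b) : nat) + ((b==i) && (i<a<=j) : nat) = ((tA i j a < tA i j b) : nat) + ((a==i) && (i<b<=j) : nat).
Proof. move=> ij; rewrite /tA; brute. Qed.

Lemma idB (i j a b : nat) : i < j ->
  ((a<b) : nat) + ((a==j) && (i<=b<j) : nat) = ((tB i j a < tB i j b) : nat) + ((b==j) && (i<=a<j) : nat).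
Proof. move=> ij; rewrite /tB; brute. Qed.

Section S.
Variables (V : finType) (E : rel V) (n : nat) (f : 'I_n -> V).
Hypothesis opt : optimal_ordering E f.

Lemma opt_le_nat (s t : nat -> nat) : (forall p, p < n -> s p < n) ->
  (forall p, p < n -> t p < n) -> (forall p, p < n -> t (s p) = p) ->
  (\sum_(a : 'I_n) \sum_(b : 'I_n) ((a < b) && Rb E f a b : nat) <=
   \sum_(a : 'I_n) \sum_(b : 'I_n) ((t a < t b) && Rb E f a b : nat))%N.
Proof.
move=> sn tn ts.
pose sig (p : 'I_n) : 'I_n := insubd p (s p).
pose tau (p : 'I_n) : 'I_n := insubd p (t p).
have vs p : val (sig p) = s p by rewrite val_insubd sn.
have vt p : val (tau p) = t p by rewrite val_insubd tn.
have can : cancel sig tau by move=> p; apply: val_inj; rewrite vt vs ts.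
apply: (leq_trans (opt_le can opt)); apply: eq_leq.
by apply: eq_bigr => a _; apply: eq_bigr => b _; rewrite !vt.
Qed.

Lemma caseA (i j : 'I_n) : (i < j)%N ->
  (\sum_(b : 'I_n) ((i < b <= j) && Rb E f i b : nat) <=
   \sum_(a : 'I_n) ((i < a <= j) && Rb E f a i : nat))%N.
Proof.
move=> ij.
have H := opt_le_nat (s := sA i j) (t := tA i j).
have := ltn_ord i; have := ltn_ord j => jn in_.
have /H {}H : forall p, p < n -> sA i j p < n by move=> p pn; rewrite /sA; brute.
have /H {}H : forall p, p < n -> tA i j p < n by move=> p pn; rewrite /tA; brute.
have /H {}H : forall p, p < n -> tA i j (sA i j p) = p by move=> p pn; rewrite /sA; case: (p =P j) => [->|pj]; [|case: ifP => ?]; rewrite /tA; brute.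
have eq : (\sum_(a : 'I_n) \sum_(b : 'I_n) ((a < b) && Rb E f a b : nat) +
   \sum_(a : 'I_n) \sum_(b : 'I_n) ((b == i) && ((i < a <= j) && Rb E f a b) : nat) =
   \sum_(a : 'I_n) \sum_(b : 'I_n) ((tA i j a < tA i j b) && Rb E f a b : nat) +
   \sum_(a : 'I_n) \sum_(b : 'I_n) ((a == i) && ((i < b <= j) && Rb E f a b) : nat))%N.
  rewrite -!big_split; apply: eq_bigr => a _; rewrite -!big_split; apply: eq_bigr => b _ /=.
  rewrite -!val_eqE /=; case: (Rb E f a b); rewrite ?andbT ?andbF /= ?addn0; first exact: idA.
  lia.
rewrite sum_eq3 sum_eq2 in eq.
move: H; rewrite -(leq_add2r (\sum_(a : 'I_n) ((i < a <= j) && Rb E f a i : nat))) eq.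
by rewrite leq_add2l.
Qed.

Lemma caseB (i j : 'I_n) : (i < j)%N ->
  (\sum_(a : 'I_n) ((i <= a < j) && Rb E f a j : nat) <=
   \sum_(b : 'I_n) ((i <= b < j) && Rb E f j b : nat))%N.
Proof.
move=> ij.
have H := opt_le_nat (s := sB i j) (t := tB i j).
have := ltn_ord i; have := ltn_ord j => jn in_.
have /H {}H : forall p, p < n -> sB i j p < n by move=> p pn; rewrite /sB; brute.
have /H {}H : forall p, p < n -> tB i j p < n by move=> p pn; rewrite /tB; brute.
have /H {}H : forall p, p < n -> tB i j (sB i j p) = p by move=> p pn; rewrite /sB; case: (p =P i) => [->|pj]; [|case: ifP => ?]; rewrite /tB; brute.
have eq : (\sum_(a : 'I_n) \sum_(b : 'I_n) ((a < b) && Rb E f a b : nat) +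
   \sum_(a : 'I_n) \sum_(b : 'I_n) ((a == j) && ((i <= b < j) && Rb E f a b) : nat) =
   \sum_(a : 'I_n) \sum_(b : 'I_n) ((tB i j a < tB i j b) && Rb E f a b : nat) +
   \sum_(a : 'I_n) \sum_(b : 'I_n) ((b == j) && ((i <= a < j) && Rb E f a b) : nat))%N.
  rewrite -!big_split; apply: eq_bigr => a _; rewrite -!big_split; apply: eq_bigr => b _ /=.
  rewrite -!val_eqE /=; case: (Rb E f a b); rewrite ?andbT ?andbF /= ?addn0; first exact: idB.
  lia.
rewrite sum_eq3 sum_eq2 in eq.
move: H; rewrite -(leq_add2r (\sum_(b : 'I_n) ((i <= b < j) && Rb E f j b : nat))) eq.
by rewrite leq_add2l.
Qed.

End S.

Lemma sum_between (N i j : nat) :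
  \sum_(k < N) ((i < k < j) : nat) = minn N j - i.+1.
Proof.
elim: N => [|N IH]; first by rewrite big_ord0; lia.
rewrite big_ord_recr /= IH; case: (ltnP i N) => ?; case: (ltnP N j) => ? /=; lia.
Qed.

Lemma sum_card (T : finType) (P : pred T) : \sum_k (P k : nat) = #|[set k | P k]|.
Proof.
rewrite -sum1_card [RHS]big_mkcond /=; apply: eq_bigr => k _; rewrite inE; by case: (P k).
Qed.

Section S.
Variables (V : finType) (E : rel V) (n : nat) (f : 'I_n -> V).
Hypothesis tour : is_tournament E.
Hypothesis opt : optimal_ordering E f.
Variables (i j : 'I_n).
Hypothesis ij : (i < j)%N.
Hypothesis Rij : Rb E f i j.

Let finj : injective f := proj1 opt.

Lemma xorR (k l : 'I_n) : k != l -> Rb E f k l (+) Rb E f l k.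
Proof.
move=> kl; rewrite /Rb addbC; apply: (proj2 tour); by rewrite (inj_eq finj).
Qed.

Lemma notRji : Rb E f j i = false.
Proof.
have := xorR (k := i) (l := j); rewrite Rij.
have -> : i != j by rewrite neq_ltn ij.
by move/(_ isT); case: (Rb E f j i).
Qed.

Definition mm := \sum_(k : 'I_n) ((i < k < j) : nat).
Definition aa := \sum_(k : 'I_n) ((i < k < j) && Rb E f i k : nat).
Definition oi := \sum_(k : 'I_n) ((i < k < j) && Rb E f k i : nat).
Definition bb := \sum_(k : 'I_n) ((i < k < j) && Rb E f k j : nat).
Definition ij' := \sum_(k : 'I_n) ((i < k < j) && Rb E f j k : nat).

Lemma mm_val : mm = (j - i.+1)%N.
Proof.
rewrite /mm -(big_mkord xpredT (fun k => ((i < k < j) : nat))).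
rewrite (big_mkord xpredT (fun k => ((i < k < j) : nat))) sum_between.
have := ltn_ord j; lia.
Qed.

Lemma fact1 : (aa + 1 <= oi)%N.
Proof.
have H := caseA opt ij.
have e1 : \sum_(b : 'I_n) ((i < b <= j) && Rb E f i b : nat) = (aa + 1)%N.
  rewrite (eq_bigr (fun k : 'I_n => ((i < k < j) && Rb E f i k) + ((k == j) && true))%N).
    by rewrite big_split sum_eq1.
  move=> k _ /=.
  case: (k =P j) => [->|kj]; first by rewrite Rij ltnn /= andbT leqnn ij.
  have : (k <= j)%N = (k < j)%N by rewrite leq_eqVlt (_ : (val k == val j) = false) //; apply/eqP => h; apply: kj; apply: val_inj.
  by move=> ->; rewrite addn0.
have e2 : \sum_(a : 'I_n) ((i < a <= j) && Rb E f a i : nat) = oi.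
  rewrite /oi; apply: eq_bigr => k _ /=.
  case: (k =P j) => [->|kj]; first by rewrite notRji ltnn /= !andbF.
  have : (k <= j)%N = (k < j)%N by rewrite leq_eqVlt (_ : (val k == val j) = false) //; apply/eqP => h; apply: kj; apply: val_inj.
  by move=> ->.
by rewrite -e1 -e2.
Qed.

Lemma fact2 : (aa + oi = mm)%N.
Proof.
rewrite /aa /oi /mm -big_split; apply: eq_bigr => k _ /=.
case: (boolP (i < k < j)) => //= /andP [ik _].
have : k != i by rewrite neq_ltn ik orbT.
by move/xorR; case: (Rb E f k i); case: (Rb E f i k).
Qed.

Lemma fact3 : (bb + 1 <= ij')%N.
Proof.
have H := caseB opt ij.
have e1 : \sum_(a : 'I_n) ((i <= a < j) && Rb E f a j : nat) = (bb + 1)%N.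
  rewrite (eq_bigr (fun k : 'I_n => ((i < k < j) && Rb E f k j) + ((k == i) && true))%N).
    by rewrite big_split sum_eq1.
  move=> k _ /=.
  case: (k =P i) => [->|kj]; first by rewrite Rij ltnn /= andbT leqnn ij.
  have : (i <= k)%N = (i < k)%N by rewrite leq_eqVlt (_ : (val i == val k) = false) //; apply/eqP => h; apply: kj; apply: val_inj.
  by move=> ->; rewrite addn0.
have e2 : \sum_(b : 'I_n) ((i <= b < j) && Rb E f j b : nat) = ij'.
  rewrite /ij'; apply: eq_bigr => k _ /=.
  case: (k =P i) => [->|kj]; first by rewrite notRji ltnn /= !andbF.
  have : (i <= k)%N = (i < k)%N by rewrite leq_eqVlt (_ : (val i == val k) = false) //; apply/eqP => h; apply: kj; apply: val_inj.
  by move=> ->.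
by rewrite -e1 -e2.
Qed.

Lemma fact4 : (bb + ij' = mm)%N.
Proof.
rewrite /bb /ij' /mm -big_split; apply: eq_bigr => k _ /=.
case: (boolP (i < k < j)) => //= /andP [_ kj].
have : k != j by rewrite neq_ltn kj.
by move/xorR; case: (Rb E f k j); case: (Rb E f j k).
Qed.

Lemma fact5 : (mm <= triangles_through E (f j) (f i) + aa + bb)%N.
Proof.
have le1 : (\sum_(k : 'I_n) ((i < k < j) && Rb E f k i && Rb E f j k : nat)
     <= triangles_through E (f j) (f i))%N.
  rewrite sum_card.
  rewrite -(card_imset _ finj) /triangles_through; apply: subset_leq_card.
  apply/subsetP => z /imsetP [k]; rewrite !inE /Rb => /andP [/andP [_ h1] h2] ->.
  by rewrite h1 h2.
apply: (leq_trans _ (leq_add (leq_add le1 (leqnn aa)) (leqnn bb))).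
rewrite /mm /aa /bb -!big_split; apply: leq_sum => k _ /=.
case: (boolP (i < k < j)) => //= /andP [ik kj].
have : k != i by rewrite neq_ltn ik orbT.
have : k != j by rewrite neq_ltn kj.
move/xorR => h1 /xorR h2.
by move: h1 h2; case: (Rb E f k i); case: (Rb E f i k); case: (Rb E f k j); case: (Rb E f j k).
Qed.

End S.

Local Open Scope ring_scope.

Lemma fin (N h1 h2 al bad b' b'' B : rat) : 0 <= N -> 0 <= h1 -> 0 <= h2 -> h1 <= N -> h2 <= N ->
  0 <= bad -> 0 <= b'' ->
  h1 * (N / 64) <= al * N ^+ 2 -> h2 * (N / 64) <= al * N ^+ 2 -> al <= (2 ^+ 16)^-1 ->
  bad <= h1 * h2 -> al * N ^+ 2 / 4 <= b' -> b' = b'' + bad -> B = al * N ^+ 2 -> 0 <= B ->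
  b' / 2 <= b''.
Proof.
move=> N0 h10 h20 h1N h2N bad0 b''0 H1 H2 hal hbad hb' eb' eB B0.
have [N00|Np] : N = 0 \/ 0 < N by rewrite le0r in N0; case/orP: N0 => [/eqP|]; [left|right].
  have h1z : h1 = 0 by lra.
  rewrite h1z mul0r in hbad; lra.
have al0 : 0 <= al by rewrite -(ler_pM2r (mulr_gt0 Np Np)) mul0r; rewrite expr2 in eB; lra.
have e1 : h1 <= 64 * al * N by rewrite -(ler_pM2r Np); rewrite expr2 in H1; lra.
have e2 : h2 <= 64 * al * N by rewrite -(ler_pM2r Np); rewrite expr2 in H2; lra.
have e3 : h1 * h2 <= (64 * al * N) * (64 * al * N) by apply: ler_pM.
have e4 : (64 * al * N) * (64 * al * N) <= al * N ^+ 2 / 16 by rewrite expr2 in hal *; nra.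
lra.
Qed.

Lemma edge_rat (a b m t L R d : nat) (n : rat) :
  (2 * a + 1 <= m)%N -> (2 * b + 1 <= m)%N -> (m <= t + a + b)%N -> (m + 1 = d)%N ->
  (a <= L)%N -> (b <= R)%N -> n / 16 <= d%:R -> t%:R < n / 64 ->
  n / 64 < L%:R /\ n / 64 < R%:R.
Proof.
move=> h1 h2 h3 h4 h5 h6 h7 h8.
move: h1 h2 h3 h5 h6; rewrite -!(ler_nat rat) !natrD => h1 h2 h3 h5 h6.
move: h7; rewrite -h4 natrD => h7.
split; lra.
Qed.

Lemma sum_sub_le (T : finType) (A : {pred T}) (F : T -> nat) :
  \sum_(x in A) (F x)%:R <= \sum_x (F x)%:R :> rat.
Proof.
rewrite [leRHS](bigID (mem A)) /= lerDl; apply: sumr_ge0 => x _; exact: ler0n.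
Qed.

Unset Implicit Arguments.
Theorem mainTheorem4 (V : finType) (E : rel V) (n : nat) (f : 'I_n -> V)
  (alpha : rat) (B' : {set 'I_n * 'I_n}) :
  is_tournament E ->
  #|V| = n ->
  optimal_ordering E f ->
  (#|backward_edges E f|)%:R = alpha * (n%:R) ^+ 2 ->
  B' = [set p in backward_edges E f | (n%:R / 16%:R <= (bedge_length p)%:R :> rat)] ->
  alpha * (n%:R) ^+ 2 / 4%:R <= (#|B'|)%:R ->
  alpha <= (2%:R ^+ 16)^-1 ->
  exists B'' : {set 'I_n * 'I_n},
    [/\ B'' \subset B',
        (#|B'|)%:R / 2%:R <= (#|B''|)%:R :> rat
      & forall p, p \in B'' ->
          n%:R / 64%:R <= (triangles_through E (f p.2) (f p.1))%:R :> rat].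
Proof.
move=> tour _ opt hB eB' hB'4 hal.
set tt := fun p : 'I_n * 'I_n => triangles_through E (f p.2) (f p.1).
set P := [set p : 'I_n * 'I_n | n%:R / 64%:R <= (tt p)%:R :> rat].
exists (B' :&: P); split.
- exact: subsetIl.
- pose Lf (x : 'I_n) := \sum_(k : 'I_n) ((x < k)%N && Rb E f x k : nat).
  pose Rt (x : 'I_n) := \sum_(k : 'I_n) ((k < x)%N && Rb E f k x : nat).
  have sL : \sum_x Lf x = #|backward_edges E f| by rewrite card_bw.
  have sR : \sum_x Rt x = #|backward_edges E f|.
    by rewrite card_bw /Rt exchange_big.
  set H1 := [set x | n%:R / 64%:R < (Lf x)%:R :> rat].
  set H2 := [set x | n%:R / 64%:R < (Rt x)%:R :> rat].
  have sub : B' :\: P \subset setX H1 H2.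
    apply/subsetP => -[i j]; rewrite !inE eB' !inE /= => /andP [hP /andP [hb hl]].
    move: hb; rewrite /backward_edges ?inE /= => /andP [ij Rij].
    rewrite -ltNge in hP.
    have := edge_rat (a := aa E f i j) (b := bb E f i j) (m := mm i j)
      (t := tt (i, j)) (L := Lf i) (R := Rt j) (d := bedge_length (i, j)).
    have f1 := fact1 tour opt ij Rij. have f2 := fact2 tour opt i j.
    have f3 := fact3 tour opt ij Rij. have f4 := fact4 tour opt i j.
    have f5 := fact5 tour opt i j.
    have f6 := (@mm_val V E n f i j ij Rij).
    have aL : (aa E f i j <= Lf i)%N.
      by apply: leq_sum => k _; case: (i < k)%N; case: (k < j)%N.
    have bR : (bb E f i j <= Rt j)%N.
      by apply: leq_sum => k _; case: (i < k)%N; case: (k < j)%N.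
    move=> HH.
    have g1 : (2 * aa E f i j + 1 <= mm i j)%N by lia.
    have g2 : (2 * bb E f i j + 1 <= mm i j)%N by lia.
    have g4 : (mm i j + 1 = bedge_length (i, j))%N by rewrite /bedge_length /=; lia.
    have [hL hR] := HH _ g1 g2 f5 g4 aL bR hl hP.
    by rewrite hL hR.
  have cB := cardsID P B'.
  set b' := #|B'| in cB hB'4 *. 
  have hbad : (#|B' :\: P|%:R <= #|H1|%:R * #|H2|%:R :> rat).
    by rewrite -natrM ler_nat -cardsX subset_leq_card.
  have bH (F : 'I_n -> nat) : (#|[set x | n%:R / 64%:R < (F x)%:R :> rat]|%:R * (n%:R / 64%:R)
       <= (\sum_x F x)%:R :> rat).
    rewrite natr_sum mulr_natl -sumr_const; apply: le_trans (sum_sub_le _ _).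
    by apply: ler_sum => x; rewrite inE => /ltW.
  apply: (@fin n%:R #|H1|%:R #|H2|%:R alpha #|B' :\: P|%:R b'%:R #|B' :&: P|%:R
            #|backward_edges E f|%:R) => //.
  + by rewrite ler_nat; apply: leq_trans (max_card _) _; rewrite card_ord.
  + by rewrite ler_nat; apply: leq_trans (max_card _) _; rewrite card_ord.
  + by rewrite -hB -sL; apply: bH.
  + by rewrite -hB -sR; apply: bH.
  + by rewrite -cB natrD.
- by move=> p; rewrite !inE => /andP [_].
Qed.
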